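(* Let $0<\varepsilon\le1/2$, let $X\subset\mathbb{R}^d$ be a finite nonempty (multi)set with $n=|X|$, and $C\subset\mathbb{R}^d$ a finite nonempty set. For $x\in X$ let $c(x)\in C$ be a nearest point of $C$ to $x$. Define $R^2=\frac{\varepsilon^2}{41}\cdot\frac{\Phi(C,X)}{n}$, $X^{near}=\{x\in X:\|x-c(x)\|\le R\}$, $X^{far}=X\setminus X^{near}$, and the multiset $X' = X^{far}\cup\{c(x):x\in X^{near}\}$. If $m''\in\mathbb{R}^d$ satisfies $\Phi(m'',X')\le(1+\frac{\varepsilon}{16})\Delta(X')$, then $\Phi(m'',X)\le(1+\frac\varepsilon2)\Delta(X)$.
   Context: $\mu(Y)$ denotes the centroid of a finite multiset $Y$, $\Delta(Y)=\sum_{y\in Y}\|y-\mu(Y)\|^2$. For a point $p$, $\Phi(p,Y)=\sum_{y\in Y}\|y-p\|^2$; for a finite set $C$, $\Phi(C,Y)=\sum_{y\in Y}\min_{c\in C}\|y-c\|^2$. *)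

(* Defs.v *)
(* Points of R^d are row vectors 'rV[R]_d over a real closed
   field R (covers the real numbers). A finite multiset of n points is an
   indexed family 'I_n -> 'rV[R]_d. *)
From HB Require Import structures.
From mathcomp Require Import all_boot all_order all_algebra.
Set Implicit Arguments. Unset Strict Implicit. Unset Printing Implicit Defensive.
Import Order.TTheory GRing.Theory Num.Theory.
Local Open Scope ring_scope.

Section Defs.
Variables (R : rcfType) (d : nat).

Definition sqnorm (v : 'rV[R]_d) : R := \sum_(i < d) (v 0 i) ^+ 2.
Definition enorm (v : 'rV[R]_d) : R := Num.sqrt (sqnorm v).

Definition centroid (n : nat) (Y : 'I_n -> 'rV[R]_d) : 'rV[R]_d :=
  (n%:R)^-1 *: \sum_(i < n) Y i.

Definition PhiP (p : 'rV[R]_d) (n : nat) (Y : 'I_n -> 'rV[R]_d) : R :=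
  \sum_(i < n) sqnorm (Y i - p).

Definition Delta (n : nat) (Y : 'I_n -> 'rV[R]_d) : R :=
  \sum_(i < n) sqnorm (Y i - centroid Y).

Definition mindist (C : seq 'rV[R]_d) (x : 'rV[R]_d) : R :=
  \big[Order.min/sqnorm (x - head 0 C)]_(c <- C) sqnorm (x - c).

Definition PhiC (C : seq 'rV[R]_d) (n : nat) (Y : 'I_n -> 'rV[R]_d) : R :=
  \sum_(i < n) mindist C (Y i).

End Defs.

(* Main.v *)
Require Import Defs.
From HB Require Import structures.
From mathcomp Require Import all_boot all_order all_algebra.
From mathcomp Require Import ring lra.
Import Order.TTheory GRing.Theory Num.Theory.
Set Implicit Arguments. Unset Strict Implicit.
Local Open Scope ring_scope.

Section H.
Variables (R : rcfType) (d : nat).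
Implicit Types u v : 'rV[R]_d.

Lemma sqnorm_ge0 v : 0 <= sqnorm v.
Proof. by apply: sumr_ge0 => j _; apply: sqr_ge0. Qed.

Lemma sqnormN v : sqnorm (- v) = sqnorm v.
Proof. by apply: eq_bigr => j _; rewrite mxE sqrrN. Qed.

Lemma sqnormB u v : sqnorm (u - v) = sqnorm (v - u).
Proof. by rewrite -sqnormN opprB. Qed.

Lemma sqnormD2 u v : sqnorm (u + v) <= 2 * sqnorm u + 2 * sqnorm v.
Proof.
rewrite /sqnorm !mulr_sumr -big_split /=; apply: ler_sum => j _.
rewrite mxE; have := sqr_ge0 (u 0 j - v 0 j); nra.
Qed.

Lemma sqnorm0 : sqnorm (0 : 'rV[R]_d) = 0.
Proof. by apply: big1 => j _; rewrite mxE expr0n. Qed.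

Lemma scalar_pa (n : nat) (y : 'I_n -> R) (p : R) : (0 < n)%N ->
  \sum_(i < n) (y i - p) ^+ 2 =
  \sum_(i < n) (y i - (n%:R)^-1 * \sum_(k < n) y k) ^+ 2
  + n%:R * ((n%:R)^-1 * \sum_(k < n) y k - p) ^+ 2.
Proof.
move=> n0; set m := _ * _.
have nz : (n%:R : R) != 0 by rewrite pnatr_eq0 -lt0n.
have hs : \sum_(i < n) (y i - m) = 0.
  by rewrite sumrB sumr_const card_ord /m -[_ *+ n]mulr_natr mulrAC mulVf // mul1r subrr.
have -> : \sum_(i < n) (y i - p) ^+ 2 = \sum_(i < n) ((y i - m) ^+ 2
   + (2 * (m - p)) * (y i - m) + (m - p) ^+ 2).
  by apply: eq_bigr => i _; ring.
rewrite !big_split /= -mulr_sumr hs mulr0 addr0 sumr_const card_ord.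
by rewrite mulr_natl.
Qed.

Lemma centroid_coord (n : nat) (Y : 'I_n -> 'rV[R]_d) j :
  centroid Y 0 j = (n%:R)^-1 * \sum_(k < n) Y k 0 j.
Proof. by rewrite /centroid mxE summxE. Qed.

Lemma pa (n : nat) (Y : 'I_n -> 'rV[R]_d) p : (0 < n)%N ->
  PhiP p Y = Delta Y + n%:R * sqnorm (p - centroid Y).
Proof.
move=> n0; rewrite /PhiP /Delta /sqnorm.
rewrite (exchange_big _ _ _ _ _ (fun i j => (Y i - p) 0 j ^+ 2)).
rewrite (exchange_big _ _ _ _ _ (fun i j => (Y i - centroid Y) 0 j ^+ 2)).
rewrite mulr_sumr -big_split /=; apply: eq_bigr => j _.
rewrite (eq_bigr (fun i => (Y i 0 j - p 0 j) ^+ 2)); last by move=> i _; rewrite !mxE.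
rewrite (@scalar_pa n (fun i => Y i 0 j) (p 0 j) n0).
congr (_ + _).
  by apply: eq_bigr => i _; rewrite !mxE summxE.
by rewrite !mxE summxE -sqrrN opprB.
Qed.

Lemma Delta_ge0 (n : nat) (Y : 'I_n -> 'rV[R]_d) : 0 <= Delta Y.
Proof. by apply: sumr_ge0 => i _; apply: sqnorm_ge0. Qed.

Lemma Delta_le (n : nat) (Y : 'I_n -> 'rV[R]_d) p : (0 < n)%N ->
  Delta Y <= PhiP p Y.
Proof.
move=> n0; rewrite (pa Y p n0) lerDl; apply: mulr_ge0; first by rewrite ler0n.
exact: sqnorm_ge0.
Qed.

Lemma centroidB (n : nat) (Y Z : 'I_n -> 'rV[R]_d) :
  centroid (fun i => Y i - Z i) = centroid Y - centroid Z.
Proof. by rewrite /centroid sumrB scalerBr. Qed.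

Lemma centroid_close (n : nat) (Y Z : 'I_n -> 'rV[R]_d) : (0 < n)%N ->
  n%:R * sqnorm (centroid Y - centroid Z) <= \sum_(i < n) sqnorm (Y i - Z i).
Proof.
move=> n0; have h := pa (fun i => Y i - Z i) 0 n0.
rewrite centroidB sub0r sqnormN in h.
have e : \sum_(i < n) sqnorm (Y i - Z i) = PhiP 0 (fun i => Y i - Z i).
  by apply: eq_bigr => i _; rewrite subr0.
by rewrite e h lerDr Delta_ge0.
Qed.

Lemma mindist_le (C : seq 'rV[R]_d) x y : y \in C -> mindist C x <= sqnorm (x - y).
Proof. by move=> yC; apply: ge_bigmin_seq. Qed.

Lemma mindist_ge0 (C : seq 'rV[R]_d) x : 0 <= mindist C x.
Proof. by apply: le_bigmin; [apply: sqnorm_ge0 | move=> c _; apply: sqnorm_ge0]. Qed.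

Lemma sqnorm_le u v : enorm u <= enorm v -> sqnorm u <= sqnorm v.
Proof. by rewrite /enorm ler_sqrt // sqnorm_ge0. Qed.

End H.
Unset Implicit Arguments.

Theorem mainTheorem12 (R : rcfType) (d n : nat) (eps : R)
  (X : 'I_n -> 'rV[R]_d) (C : seq 'rV[R]_d) (c : 'I_n -> 'rV[R]_d)
  (m'' : 'rV[R]_d) :
  0 < eps -> eps <= 1 / 2 ->
  (0 < n)%N -> C != [::] ->
  (forall i, c i \in C) ->
  (forall i y, y \in C -> enorm (X i - c i) <= enorm (X i - y)) ->
  let Rad := Num.sqrt (eps ^+ 2 / 41 * (PhiC C X / n%:R)) in
  let X' := fun i => if enorm (X i - c i) <= Rad then c i else X i in
  PhiP m'' X' <= (1 + eps / 16) * Delta X' ->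
  PhiP m'' X <= (1 + eps / 2) * Delta X.
Proof.
move=> e0 e1 n0 _ cC cnear Rad X' hyp.
set nn : R := n%:R.
have nn0 : 0 < nn by rewrite ltr0n.
set A := PhiC C X.
set al := eps ^+ 2 / 41.
have al0 : 0 <= al by apply: divr_ge0; [apply: sqr_ge0 | lra].
have al1 : al <= 1 / 164.
  rewrite /al; have : eps ^+ 2 <= 1 / 4 by rewrite expr2; nra.
  lra.
set R2 := al * (A / nn).
have A0 : 0 <= A by apply: sumr_ge0 => i _; apply: mindist_ge0.
have R20 : 0 <= R2 by apply: mulr_ge0 => //; apply: divr_ge0 => //; apply: ltW.
have nnR2 : nn * R2 = al * A by rewrite /R2; field; apply: lt0r_neq0.
pose a2 i := sqnorm (X i - c i).
pose nu i : R := if enorm (X i - c i) <= Rad then 1 else 0.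
have nu01 i : 0 <= nu i <= 1 by rewrite /nu; case: ifP => _; rewrite ?lexx ?ler01.
have near_le i : nu i * a2 i <= nu i * R2.
  rewrite /nu; case: ifP => h; last by rewrite !mul0r.
  rewrite !mul1r; move: h; rewrite /Rad /enorm ler_sqrt //.
set mu := centroid X.
pose q i := sqnorm (X i - mu).
have DeltaE : Delta X = \sum_i q i by [].
set D := \sum_(i < n) sqnorm (X i - X' i).
have DE : D = \sum_i nu i * a2 i.
  apply: eq_bigr => i _; rewrite /X' /nu /a2; case: ifP => _.
    by rewrite mul1r.
  by rewrite subrr sqnorm0 mul0r.
have Asum : A <= \sum_i a2 i.
  by apply: ler_sum => i _; apply: mindist_le.
have pair i k : nu i * (1 - nu k) * (a2 k / 2 - R2) <= nu i * (1 - nu k) * sqnorm (X k - X i).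
  have [h0 h1] := andP (nu01 k).
  case h: (enorm (X i - c i) <= Rad); last first.
    have -> : nu i = 0 by rewrite /nu h.
    by rewrite !mul0r.
  have -> : nu i = 1 by rewrite /nu h.
  rewrite !mul1r; apply: ler_wpM2l; first lra.
  have h2 : a2 k <= sqnorm (X k - c i) by apply: sqnorm_le; apply: cnear.
  have h3 : sqnorm (X k - c i) <= 2 * sqnorm (X k - X i) + 2 * a2 i.
    have -> : X k - c i = (X k - X i) + (X i - c i) by rewrite addrA subrK.
    exact: sqnormD2.
  have h4 : a2 i <= R2 by move: h; rewrite /Rad /enorm ler_sqrt.
  lra.
have pairU i k : sqnorm (X k - X i) <= 2 * q k + 2 * q i.
  have -> : X k - X i = (X k - mu) + (mu - X i) by rewrite addrA subrK.
  by rewrite /q (sqnormB (X i)); apply: sqnormD2.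
set V := \sum_i nu i.
have V0 : 0 <= V by apply: sumr_ge0 => i _; case/andP: (nu01 i).
set L := \sum_k (1 - nu k) * (a2 k / 2 - R2).
have Llow : A / 2 - nn * R2 <= L.
  have : \sum_k (a2 k / 2 - R2) <= L.
    apply: ler_sum => k _.
    have := near_le k; have [h0 h1] := andP (nu01 k).
    nra.
  rewrite sumrB -mulr_suml sumr_const card_ord -/nn mulr_natl.
  lra.
have Slow : V * L <= \sum_i \sum_k nu i * (1 - nu k) * sqnorm (X k - X i).
  rewrite /V /L mulr_suml; apply: ler_sum => i _.
  rewrite mulr_sumr; apply: ler_sum => k _.
  by rewrite mulrA; apply: pair.
have Sup : \sum_i \sum_k nu i * (1 - nu k) * sqnorm (X k - X i) <= 4 * nn * Delta X.
  apply: (@le_trans _ _ (\sum_(i < n) \sum_(k < n) (2 * q k + 2 * q i))).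
    apply: ler_sum => i _; apply: ler_sum => k _.
    apply: le_trans (pairU i k).
    have [h0 h1] := andP (nu01 i); have [h2 h3] := andP (nu01 k).
    have hs := sqnorm_ge0 (X k - X i).
    have : 0 <= nu i * (1 - nu k) <= 1 by apply/andP; split; nra.
    case/andP => g0 g1.
    by rewrite -[X in _ <= X]mul1r; apply: ler_wpM2r.
  rewrite DeltaE.
  have -> : \sum_(i < n) \sum_(k < n) (2 * q k + 2 * q i)
      = \sum_(i < n) (2 * \sum_k q k + nn * (2 * q i)).
    apply: eq_bigr => i _; rewrite big_split /= -mulr_sumr sumr_const card_ord.
    rewrite -[_ *+ n]mulr_natl. done.
  rewrite big_split /= sumr_const card_ord -!mulr_sumr -[_ *+ n]mulr_natr -/nn.
  lra.
have Dle : D <= V * R2.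
  rewrite DE /V mulr_suml; apply: ler_sum => i _; exact: near_le.
have key : V * (A / 2 - al * A) <= 4 * nn * Delta X.
  rewrite -nnR2; apply: le_trans Sup; apply: le_trans Slow.
  by apply: ler_wpM2l.
have Dpos : 0 <= D by apply: sumr_ge0 => i _; apply: sqnorm_ge0.
have Del0 := Delta_ge0 X.
have Dbound : D <= eps ^+ 2 / 5 * Delta X.
  have h1 : nn * D <= V * (al * A).
    by rewrite -nnR2 mulrCA; apply: ler_wpM2l.
  have h2 : D * (1 / 2 - al) <= 4 * al * Delta X.
    have h3 : nn * (D * (1 / 2 - al)) <= nn * (4 * al * Delta X).
      have : V * (al * A) * (1 / 2 - al) <= al * (4 * nn * Delta X).
        have := ler_wpM2l al0 key.
        have -> : al * (V * (A / 2 - al * A)) = V * (al * A) * (1 / 2 - al) by ring.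
        done.
      have hh : 0 <= 1 / 2 - al by lra.
      have := ler_wpM2r hh h1.
      move=> a b; rewrite mulrA; apply: le_trans a _; apply: le_trans b _.
      by rewrite le_eqVlt; apply/orP; left; apply/eqP; ring.
    by rewrite ler_pM2l in h3.
  have h4 : 4 * al <= eps ^+ 2 / 5 * (1 / 2 - al).
    have -> : eps ^+ 2 = 41 * al by rewrite /al; field.
    have h164 : 0 <= 1 / 164 - al by lra.
    have := mulr_ge0 al0 h164; nra.
  have h5 : 0 < 1 / 2 - al by lra.
  have h6 : D * (1 / 2 - al) <= eps ^+ 2 / 5 * Delta X * (1 / 2 - al).
    have := ler_wpM2r Del0 h4; lra.
  by rewrite ler_pM2r in h6.
set mu' := centroid X'.
have p1 := pa X m'' n0.
have p2 := pa X' m'' n0.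
have c1 : nn * sqnorm (mu - mu') <= D by apply: centroid_close.
have c2 : sqnorm (m'' - mu) <= 2 * sqnorm (m'' - mu') + 2 * sqnorm (mu - mu').
  have -> : m'' - mu = (m'' - mu') + (mu' - mu) by rewrite addrA subrK.
  by rewrite (sqnormB mu); apply: sqnormD2.
have c3 : Delta X' <= 2 * Delta X + 2 * D.
  apply: le_trans (Delta_le X' mu n0) _.
  rewrite /PhiP DeltaE /D !mulr_sumr -big_split /=; apply: ler_sum => i _.
  have -> : X' i - mu = (X i - mu) + (X' i - X i) by rewrite [RHS]addrC addrA subrK.
  by rewrite (sqnormB (X i) (X' i)); apply: sqnormD2.
have c4 : nn * sqnorm (m'' - mu') <= eps / 16 * Delta X'.
  move: hyp; rewrite p2; lra.
rewrite p1.
have s0 := sqnorm_ge0 (m'' - mu').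
have s1 := sqnorm_ge0 (mu - mu').
have c5 : nn * sqnorm (m'' - mu) <= 2 * (nn * sqnorm (m'' - mu')) + 2 * D.
  have := ler_wpM2l (ltW nn0) c2; lra.
have h7 := ler_wpM2l (ltW e0) c3.
have k0 : 0 <= eps / 4 + 2 by lra.
have h8 := ler_wpM2l k0 Dbound.
have k : (eps / 4 + 2) * (eps ^+ 2 / 5) <= eps / 4.
  rewrite expr2.
  have k1 : 0 <= eps * (1 / 2 - eps) by apply: mulr_ge0; lra.
  have k2 : 0 <= eps * eps by apply: mulr_ge0; lra.
  nra.
have h9 := ler_wpM2r Del0 k.
have Dl0 : 0 <= Delta X' := Delta_ge0 X'.
lra.
Qed.
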